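(* Let $\mathcal{B}$ be a real Banach space having a pre-dual space $\mathcal{B}_*$, let $\nu_j\in\mathcal{B}_*$, $j\in\mathbb{N}_m$, be linearly independent, and let $\mathbf{y}\in\mathbb{R}^m\setminus\{0\}$. For $\mathbf{c}\in\mathbb{R}^m$ put $\mathcal{L}^*(\mathbf{c}):=\sum_{j\in\mathbb{N}_m}c_j\nu_j$. Then $\hat{\mathbf{c}}\in\mathbb{R}^m\setminus\{0\}$ is a solution of $$\inf\{\|\mathcal{L}^*(\mathbf{c})\|_{\mathcal{B}_*}:\ \langle\mathbf{c},\mathbf{y}\rangle_{\mathbb{R}^m}=1,\ \mathbf{c}\in\mathbb{R}^m\}\qquad(\mathrm{D})$$ if and only if $$\frac{1}{\|\mathcal{L}^*(\hat{\mathbf{c}})\|_{\mathcal{B}_*}}\,\partial\|\cdot\|_{\mathcal{B}_*}(\mathcal{L}^*(\hat{\mathbf{c}}))\cap\mathcal{M}_{\mathbf{y}}\neq\emptyset.$$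
   Context: $\mathcal{B}$ is a real Banach space with dual $\mathcal{B}^*$ and pairing $\langle\nu,f\rangle_{\mathcal{B}}:=\nu(f)$; $\mathbb{N}_m:=\{1,\dots,m\}$; $\mathcal{L}(f):=[\langle\nu_j,f\rangle_{\mathcal{B}}:j\in\mathbb{N}_m]$, $\mathcal{M}_{\mathbf{y}}:=\{f\in\mathcal{B}:\mathcal{L}(f)=\mathbf{y}\}$. A normed space $\mathcal{B}_*$ is a pre-dual of $\mathcal{B}$ if $(\mathcal{B}_* )^*=\mathcal{B}$, with $\langle\nu,f\rangle_{\mathcal{B}}=f(\nu)$ for $\nu\in\mathcal{B}_*$. For a convex $\phi$ on a real normed space $X$, $\partial\phi(x):=\{\mu\in X^*:\phi(z)-\phi(x)\ge\mu(z-x)\ \forall z\in X\}$; so $\partial\|\cdot\|_{\mathcal{B}_*}(\nu)\subseteq\mathcal{B}$. *)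

(* Defs.v *)
From HB Require Import structures.
From mathcomp Require Import all_boot all_order all_algebra.
From mathcomp Require Import all_classical all_reals topology normedtype.
Set Implicit Arguments. Unset Strict Implicit. Unset Printing Implicit Defensive.
Import Order.TTheory GRing.Theory Num.Theory.
Import numFieldNormedType.Exports.
Local Open Scope classical_set_scope.
Local Open Scope ring_scope.

(* The pre-dual B_* is a real normed space V; B = (B_* )^* is the space of
   continuous linear functionals on V, with <nu, f>_B = f nu. *)
Definition dual_elem (R : realType) (V : normedModType R) (f : V -> R) : Prop :=
  (forall (a : R) (x y : V), f (a *: x + y) = a * f x + f y) /\ continuous f.

Definition lin_indep (R : realType) (V : normedModType R) (m : nat)
  (nu : 'I_m -> V) : Prop :=
  forall c : 'I_m -> R, \sum_(j < m) c j *: nu j = 0 -> forall j, c j = 0.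

Definition Lstar (R : realType) (V : normedModType R) (m : nat)
  (nu : 'I_m -> V) (c : 'I_m -> R) : V := \sum_(j < m) c j *: nu j.

Definition dotRm (R : realType) (m : nat) (c y : 'I_m -> R) : R :=
  \sum_(j < m) c j * y j.

Definition solves_D (R : realType) (V : normedModType R) (m : nat)
  (nu : 'I_m -> V) (y : 'I_m -> R) (chat : 'I_m -> R) : Prop :=
  dotRm chat y = 1 /\
  forall c : 'I_m -> R, dotRm c y = 1 -> `|Lstar nu chat| <= `|Lstar nu c|.

Definition subdiff_norm (R : realType) (V : normedModType R) (nu0 : V)
  : set (V -> R) :=
  [set f | dual_elem f /\ forall z : V, f (z - nu0) <= `|z| - `|nu0|].

Definition M_y (R : realType) (V : normedModType R) (m : nat)
  (nu : 'I_m -> V) (y : 'I_m -> R) : set (V -> R) :=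
  [set f | dual_elem f /\ forall j, f (nu j) = y j].

Definition scale_set (R : realType) (V : normedModType R) (t : R)
  (S : set (V -> R)) : set (V -> R) :=
  [set f | exists2 g, S g & f = (fun v => t * g v)].

(* Main.v *)
Require Import Defs.
From HB Require Import structures.
From mathcomp Require Import all_boot all_order all_algebra.
From mathcomp Require Import all_classical all_reals topology normedtype.
From mathcomp Require Import ring lra.
Import Order.TTheory GRing.Theory Num.Theory.
Import numFieldNormedType.Exports.
Local Open Scope classical_set_scope.
Local Open Scope ring_scope.
Set Implicit Arguments. Unset Strict Implicit.

Section LinHelp.
Context (R : realType) (V : lmodType R) (f : V -> R).
Hypothesis fl : forall (a : R) (x y : V), f (a *: x + y) = a * f x + f y.

Lemma lin0 : f 0 = 0.
Proof.
have := fl 1 0 0; rewrite scaler0 addr0 mul1r => h.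
by apply: (addrI (f 0)); rewrite addr0 -h.
Qed.

Lemma linD x y : f (x + y) = f x + f y.
Proof. by rewrite -[x in LHS]scale1r fl mul1r. Qed.

Lemma linZ a x : f (a *: x) = a * f x.
Proof. by rewrite -[_ *: x]addr0 fl lin0 addr0. Qed.

Lemma linN x : f (- x) = - f x.
Proof. by rewrite -scaleN1r linZ mulN1r. Qed.

Lemma linB x y : f (x - y) = f x - f y.
Proof. by rewrite linD linN. Qed.

Lemma linsum m (c : 'I_m -> R) (nu : 'I_m -> V) :
  f (\sum_(j < m) c j *: nu j) = \sum_(j < m) c j * f (nu j).
Proof.
elim/big_ind2: _ => //; first by rewrite lin0.
  by move=> a b u v <- <-; rewrite linD.
by move=> i _; rewrite linZ.
Qed.
End LinHelp.

Lemma lin_bound_cont (R : realType) (V : normedModType R) (f : V -> R) (k : R) :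
  (forall (a : R) (x y : V), f (a *: x + y) = a * f x + f y) ->
  (forall v, `|f v| <= k * `|v|) -> continuous f.
Proof.
move=> fl fb x; apply/(@cvgrPdist_lt _ _ _ (nbhs x)) => e e_gt0.
have K0 : 0 < `|k| + 1 by rewrite ltr_pwDr// normr_ge0.
near=> z; rewrite -(linB fl).
apply: (le_lt_trans (fb _)).
apply: (le_lt_trans (y := (`|k| + 1) * `|x - z|)).
  apply: ler_wpM2r; first exact: normr_ge0.
  by apply: (le_trans (ler_norm k)); rewrite lerDl.
rewrite -ltr_pdivlMl//.
near: z; apply: (@cvgr_dist_lt _ _ _ _ _ id); first exact: cvg_id.
by rewrite mulrC divr_gt0.
Unshelve. all: by end_near. Qed.

Section HBSec.
Context (R : realType) (V : lmodType R) (p : V -> R).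
Hypothesis pD : forall u v, p (u + v) <= p u + p v.
Hypothesis pZ : forall t v, 0 <= t -> p (t *: v) = t * p v.

Definition good (G : set (V * R)) : Prop :=
  [/\ (forall v r s, G (v, r) -> G (v, s) -> r = s),
      (forall a u v r s, G (u, r) -> G (v, s) -> G (a *: u + v, a * r + s)),
      (forall v r, G (v, r) -> r <= p v) & G (0, 0)].

Lemma goodZ G a u r : good G -> G (u, r) -> G (a *: u, a * r).
Proof.
case=> _ gl _ g0 Gu; have := gl a u 0 r 0 Gu g0.
by rewrite !addr0.
Qed.

Lemma goodB G u v r s : good G -> G (u, r) -> G (v, s) -> G (u - v, r - s).
Proof.
case=> _ gl _ _ Gu Gv; have := gl (-1) v u s r Gv Gu.
by rewrite scaleN1r mulN1r addrC [(- s) + r]addrC.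
Qed.

Lemma HB_ext (B : set (V * R)) : good B ->
  exists g : V -> R, (forall a x y, g (a *: x + y) = a * g x + g y) /\
    (forall v, g v <= p v) /\ (forall v r, B (v, r) -> g v = r).
Proof.
move=> gB.
pose P := fun G : set (V * R) => G = set0 \/ (good G /\ B `<=` G).
have chainP : forall F : set (set (V * R)), F `<=` P -> total_on F subset ->
    P (\bigcup_(X in F) X).
  move=> F FP Ftot.
  have two : forall a b, (\bigcup_(X in F) X) a -> (\bigcup_(X in F) X) b ->
      exists Y, [/\ F Y, good Y, Y a & Y b].
    move=> a b [X FX Xa] [Y FY Yb].
    have gd : forall Z, F Z -> Z a \/ Z b -> good Z.
      move=> Z FZ Zab; case: (FP Z FZ) => [Z0|[]//].
      by move: Zab; rewrite Z0 => -[].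
    case: (Ftot X Y FX FY) => [XY|YX].
    - by exists Y; split => //; [apply: gd => //; right | apply: XY].
    - by exists X; split => //; [apply: gd => //; left | apply: YX].
  case: (pselect (exists X, F X /\ X !=set0)) => [[X0 [FX0 [q X0q]]]|none].
    right; have gX0 : good X0.
      by case: (FP X0 FX0) => [E|[]//]; move: X0q; rewrite E.
    have BX0 : B `<=` X0.
      by case: (FP X0 FX0) => [E|[]//]; move: X0q; rewrite E.
    split; last by move=> q' Bq'; exists X0 => //; apply: BX0.
    split.
    - move=> v r s H1 H2; have [Y [FY gY Y1 Y2]] := two _ _ H1 H2.
      by case: gY => gf _ _ _; apply: gf Y1 Y2.
    - move=> a u v r s H1 H2; have [Y [FY gY Y1 Y2]] := two _ _ H1 H2.
      by exists Y => //; case: gY => _ gl _ _; apply: gl.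
    - move=> v r H1; have [Y [FY gY Y1 _]] := two _ _ H1 H1.
      by case: gY => _ _ gd _; apply: gd.
    - by exists X0 => //; case: gX0.
  left; apply/seteqP; split => // q [X FX Xq]; apply: none.
  by exists X; split => //; exists q.
have [A [PA maxA]] := Zorn_bigcup chainP.
have PB : P B by rewrite /P; right; split.
have B00 : B (0, 0) by case: gB.
have [gA BA] : good A /\ B `<=` A.
  case: PA => // A0; exfalso; apply: (maxA B) => //; rewrite A0; split => //.
  by move=> /(_ _ B00).
have dom : forall x, exists r, A (x, r).
  move=> x0; apply: contrapT => ndom.
  have [gf gl gd g0] := gA.
  pose S := [set z | exists u r, A (u, r) /\ z = r - p (u - x0)].
  have key : forall u r w s, A (u, r) -> A (w, s) -> r - p (u - x0) <= p (w + x0) - s.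
    move=> u r w s Au Aw.
    have := gd _ _ (gl 1 u w r s Au Aw); rewrite scale1r mul1r => h.
    have := pD (u - x0) (w + x0).
    have -> : u - x0 + (w + x0) = u + w by rewrite addrCA subrK addrC.
    move=> h2.
    lra.
  have hsup : has_sup S.
    split; first by exists (0 - p (0 - x0)), 0, 0.
    exists (p (0 + x0) - 0) => z [u [r [Au ->]]]; exact: key.
  pose c := sup S.
  have c1 : forall u r, A (u, r) -> r - p (u - x0) <= c.
    by move=> u r Au; apply: sup_upper_bound => //; exists u, r.
  have c2 : forall w s, A (w, s) -> c <= p (w + x0) - s.
    move=> w s Aw; apply: ge_sup; first by case: hsup.
    by move=> z [u [r [Au ->]]]; exact: key.
  pose A' := [set q | exists u r t, A (u, r) /\ q = (u + t *: x0, r + t * c)].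
  have AA' : A `<=` A'.
    by move=> [u r] Au; exists u, r, 0; rewrite scale0r mul0r !addr0.
  apply: (maxA A').
    split => // /(_ (x0, c)) H; apply: ndom; exists c; apply: H.
    by exists 0, 0, 1; rewrite scale1r mul1r !add0r.
  right; split; last exact: subset_trans AA'.
  split.
  - move=> v r s [u1 [r1 [t1 [A1 [-> ->]]]]] [u2 [r2 [t2 [A2 [E ->]]]]].
    have [te|nt] := eqVneq t1 t2.
      rewrite -te in E *.
      have E' : u1 = u2 by rewrite -(addrK (t1 *: x0) u1) E addrK.
      by rewrite E' in A1; rewrite (gf _ _ _ A1 A2).
    exfalso; apply: ndom; exists ((t1 - t2)^-1 * (r2 - r1)).
    have -> : x0 = (t1 - t2)^-1 *: (u2 - u1).
      have h : u2 - u1 = (t1 - t2) *: x0.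
        have -> : u2 = u1 + t1 *: x0 - t2 *: x0 by rewrite E addrK.
        by rewrite addrAC [u1 + _ - u1]addrAC subrr add0r scalerBl.
      by rewrite h scalerA mulVf ?subr_eq0 // scale1r.
    apply: goodZ => //; exact: goodB.
  - move=> a v w r s [u1 [r1 [t1 [A1 [-> ->]]]]] [u2 [r2 [t2 [A2 [-> ->]]]]].
    exists (a *: u1 + u2), (a * r1 + r2), (a * t1 + t2); split; first exact: gl.
    congr (_, _); last by ring.
    by rewrite scalerDr scalerA scalerDl addrACA.
  - move=> v r [u [r' [t [Au [-> ->]]]]].
    case: (ltrgt0P t) => [tp|tn|->].
    + have h := c2 _ _ (goodZ (t^-1) gA Au).
      have hp := pZ (t^-1 *: u + x0) (ltW tp).
      have e : t *: (t^-1 *: u + x0) = u + t *: x0.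
        by rewrite scalerDr scalerA mulfV ?gt_eqF// scale1r.
      rewrite e in hp; rewrite hp.
      have := ler_wpM2l (ltW tp) h; rewrite mulrBr mulrA mulfV ?gt_eqF // mul1r.
      lra.
    + have sp : 0 < - t by rewrite oppr_gt0.
      have h := c1 _ _ (goodZ ((- t)^-1) gA Au).
      have hp := pZ ((- t)^-1 *: u - x0) (ltW sp).
      have e : (- t) *: ((- t)^-1 *: u - x0) = u + t *: x0.
        by rewrite scalerDr scalerA mulfV ?gt_eqF// scale1r scalerN scaleNr opprK.
      rewrite e in hp; rewrite hp.
      have := ler_wpM2l (ltW sp) h; rewrite mulrBr mulrA mulfV ?gt_eqF // mul1r.
      lra.
    + by rewrite scale0r mul0r !addr0; apply: gd.
  - by apply: AA'.
have [gf gl gd g0] := gA.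
pose g x := sval (cid (dom x)).
have Ag : forall x, A (x, g x) by move=> x; rewrite /g; case: cid.
exists g; split; last split.
- by move=> a x y; apply: gf (Ag _) (gl _ _ _ _ _ (Ag x) (Ag y)).
- by move=> v; apply: gd.
- by move=> v r Bv; apply: gf (Ag _) (BA _ Bv).
Qed.
End HBSec.

Lemma Lstar_lin (R : realType) (V : normedModType R) (m : nat)
  (nu : 'I_m -> V) (a : R) (c d : 'I_m -> R) :
  a *: Lstar nu c + Lstar nu d = Lstar nu (fun j => a * c j + d j).
Proof.
rewrite /Lstar scaler_sumr -big_split; apply: eq_bigr => j _ /=.
by rewrite scalerDl scalerA.
Qed.

Lemma dot_lin (R : realType) (m : nat) (a : R) (c d y : 'I_m -> R) :
  a * dotRm c y + dotRm d y = dotRm (fun j => a * c j + d j) y.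
Proof.
rewrite /dotRm mulr_sumr -big_split; apply: eq_bigr => j _ /=.
by rewrite mulrDl mulrA.
Qed.

Lemma Lstar_scale (R : realType) (V : normedModType R) (m : nat)
  (nu : 'I_m -> V) (a : R) (c : 'I_m -> R) :
  Lstar nu (fun j => a * c j) = a *: Lstar nu c.
Proof.
by rewrite /Lstar scaler_sumr; apply: eq_bigr => j _; rewrite scalerA.
Qed.

Lemma dot_scale (R : realType) (m : nat) (a : R) (c y : 'I_m -> R) :
  dotRm (fun j => a * c j) y = a * dotRm c y.
Proof.
by rewrite /dotRm mulr_sumr; apply: eq_bigr => j _; rewrite mulrA.
Qed.

Theorem mainTheorem10 (R : realType) (V : normedModType R) (m : nat)
  (nu : 'I_m -> V) (y : 'I_m -> R) (chat : 'I_m -> R) :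
  lin_indep nu -> y <> (fun _ => 0) -> chat <> (fun _ => 0) ->
  (solves_D nu y chat <->
   scale_set (`|Lstar nu chat|)^-1 (subdiff_norm (Lstar nu chat))
     `&` M_y nu y !=set0).
Proof.
move=> li _ cne.
set nh := Lstar nu chat.
have nh0 : nh != 0.
  apply/eqP => h; apply: cne; apply/funext => j; exact: li h j.
have nhp : 0 < `|nh| by rewrite normr_gt0.
have fLs : forall f : V -> R, (forall a x y, f (a *: x + y) = a * f x + f y) ->
    forall c, f (Lstar nu c) = \sum_(j < m) c j * f (nu j).
  by move=> f fl c; rewrite /Lstar (linsum fl).
split.
- move=> [dot1 opt].
  pose k := `|nh|^-1.
  have k0 : 0 < k by rewrite invr_gt0.
  pose B := [set q : V * R | exists c, q = (Lstar nu c, dotRm c y)].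
  have gB : good (fun v => k * `|v|) B.
    split.
    + move=> v r s [c1 [-> ->]] [c2 [E ->]].
      suff -> : c1 = c2 by [].
      apply/funext => j; apply/eqP; rewrite -subr_eq0; apply/eqP.
      apply: (li (fun j => c1 j - c2 j)).
      have h := Lstar_lin nu (-1) c2 c1; rewrite scaleN1r -E addNr in h.
      rewrite [RHS]h /Lstar.
      by apply: eq_bigr => i _; rewrite mulN1r addrC.
    + move=> a u v r s [c1 [-> ->]] [c2 [-> ->]].
      by exists (fun j => a * c1 j + c2 j); rewrite Lstar_lin dot_lin.
    + move=> v r [c [-> ->]].
      set s := dotRm c y.
      have [sle|sgt] := lerP s 0.
        by apply: (le_trans sle); rewrite mulr_ge0 // ltW.
      have := opt (fun j => s^-1 * c j).
      rewrite dot_scale mulVf ?gt_eqF// Lstar_scale normrZ gtr0_norm ?invr_gt0//.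
      move=> /(_ erefl) h.
      have := ler_wpM2l (ltW sgt) h; rewrite mulrA mulfV ?gt_eqF// mul1r => h2.
      by rewrite /k mulrC ler_pdivlMr.
    + exists (fun _ => 0); congr (_, _).
        by rewrite /Lstar big1 // => j _; rewrite scale0r.
      by rewrite /dotRm big1 // => j _; rewrite mul0r.
  have pD : forall u v : V, k * `|u + v| <= k * `|u| + k * `|v|.
    by move=> u v; rewrite -mulrDr ler_pM2l // ler_normD.
  have pZ : forall (t : R) (v : V), 0 <= t -> k * `|t *: v| = t * (k * `|v|).
    by move=> t v t0; rewrite normrZ ger0_norm // mulrCA.
  have [g [gl [gp gB']]] := HB_ext pD pZ gB.
  have gabs : forall v, `|g v| <= k * `|v|.
    move=> v; rewrite ler_norml gp andbT lerNl -(linN gl).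
    by rewrite -[X in _ <= _ * X]normrN gp.
  have gcont := lin_bound_cont gl gabs.
  have gnh : g nh = 1 by rewrite (gB' nh (dotRm chat y)) //; exists chat.
  have gnu : forall j, g (nu j) = y j.
    move=> j; have := gB' (Lstar nu (fun i => (i == j)%:R)) (dotRm (fun i => (i == j)%:R) y).
    move=> /(_ (ex_intro _ (fun i => (i == j)%:R) erefl)).
    have -> : Lstar nu (fun i => (i == j)%:R) = nu j.
      rewrite /Lstar (bigD1 j) //= eqxx scale1r big1 ?addr0 // => i /negbTE ->.
      by rewrite scale0r.
    have -> : dotRm (fun i => (i == j)%:R) y = y j.
      rewrite /dotRm (bigD1 j) //= eqxx mul1r big1 ?addr0 // => i /negbTE ->.
      by rewrite mul0r.
    by [].
  exists g; split; last by split => //; split.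
  exists (fun v => `|nh| * g v).
    split; first split.
    + by move=> a x z; rewrite gl; ring.
    + apply: (lin_bound_cont (k := `|nh| * k)).
        by move=> a x z; rewrite gl; ring.
      move=> v; rewrite normrM gtr0_norm // -mulrA ler_pM2l //.
    + move=> z; rewrite (linB gl) gnh mulrBr mulr1.
      have := ler_wpM2l (ltW nhp) (gp z); rewrite mulrA mulfV ?gt_eqF // mul1r.
      lra.
  by apply/funext => v; rewrite mulrA mulVf ?gt_eqF // mul1r.
- move=> [f [[g [[gl gc] gsub] fE] [[fl fc] fy]]].
  have gnh : g nh = `|nh|.
    have := gsub 0; rewrite sub0r normr0 (linN gl) => h1.
    have := gsub (nh + nh); rewrite addrK => h2.
    have := ler_normD nh nh => h3.
    lra.
  have gle : forall w, g w <= `|w|.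
    move=> w; have := gsub (w + nh); rewrite addrK => h1.
    have := ler_normD w nh => h2.
    lra.
  have fL : forall c, f (Lstar nu c) = dotRm c y.
    by move=> c; rewrite (fLs f fl) /dotRm; apply: eq_bigr => j _; rewrite fy.
  split.
    by rewrite -fL fE /= gnh mulVf ?gt_eqF.
  move=> c dc; have := fL c; rewrite dc fE /= => h.
  have h2 : 1 <= `|nh|^-1 * `|Lstar nu c|.
    rewrite -h; apply: ler_wpM2l; [by rewrite invr_ge0 ltW | exact: gle].
  by move: h2; rewrite mulrC ler_pdivlMr // mul1r.
Qed.
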